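(* Let $|\psi\rangle$ be an $N$-qubit state and $|\psi'\rangle$ an $n$-qubit state with $N\ge n$, such that $|\psi\rangle$ can be transformed into $|\psi'\rangle|0\rangle^{\otimes(N-n)}$ (with $|\psi'\rangle$ on some set of $n$ of the qubits) by stochastic local operations and classical communication (SLOCC) with non-zero probability. Then $\chi_{\mathrm{wd}}(|\psi\rangle)\ge\chi_{\mathrm{wd}}(|\psi'\rangle)$. Consequently, the Schmidt-rank width is both a type I and a type II entanglement monotone.
   Context: A subcubic tree is a tree with all vertex degrees in $\{1,3\}$; its degree-1 vertices are leaves. For an $N$-qubit state $|\psi\rangle$ on $V=\{1,\dots,N\}$, consider subcubic trees $T$ with $N$ leaves identified with the qubits; deleting an edge $e$ of $T$ induces a bipartition $(A^e_T,B^e_T)$ of $V$. Let $\chi_{A,B}(|\psi\rangle)=\mathrm{rank}(\rho_A)$, $\rho_A=\mathrm{Tr}_B|\psi\rangle\langle\psi|$ (the Schmidt rank). The Schmidt-rank width is $\chi_{\mathrm{wd}}(|\psi\rangle)=\min_T\max_{e\in T}\log_2\chi_{A^e_T,B^e_T}(|\psi\rangle)$. A type I entanglement monotone is a functional $M$ such that for every LOCC protocol on $n$ qubits mapping $|\psi\rangle$ to $n$-qubit states $|\psi_i\rangle$ with probabilities $p_i$, $M(|\psi\rangle)\ge\sum_ip_iM(|\psi_i\rangle)$. Write $|\psi\rangle\geq_{\mathrm{LOCC}}|\phi\rangle$ ($N$-qubit $|\psi\rangle$, $n$-qubit $|\phi\rangle$, $n\le N$) if for some set $A$ of $n$ qubits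 $|\psi\rangle\to|\phi\rangle^A|0\rangle^{\bar A}$ is achievable exactly with probability one by LOCC; a type II entanglement monotone is a functional $E$ on all multi-qubit states with $E(|\psi\rangle)\ge E(|\psi'\rangle)$ whenever $|\psi\rangle\geq_{\mathrm{LOCC}}|\psi'\rangle$. *)

(* Defs.v *)
From HB Require Import structures.
From mathcomp Require Import all_boot all_order all_algebra.
From mathcomp Require Import boolp reals exp.
From mathcomp Require Import complex.

Set Implicit Arguments.
Unset Strict Implicit.
Unset Printing Implicit Defensive.
Import Order.TTheory GRing.Theory Num.Theory.
Local Open Scope ring_scope.

Section QuantumDefs.
Variable R : realType.
Local Notation C := (R[i]).

Definition config (N : nat) := {ffun 'I_N -> bool}.
(* An (unnormalized) vector of the N-qubit Hilbert space (C^2)^{\otimes N}. *)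
Definition qstate (N : nat) := {ffun config N -> C}.

Definition sqmod (z : C) : R := (complex.Re z) ^+ 2 + (complex.Im z) ^+ 2.
Definition norm2 N (psi : qstate N) : R := \sum_x sqmod (psi x).
Definition normalized N (psi : qstate N) := norm2 psi = 1.

Definition partA N (A : {set 'I_N}) := {ffun {i : 'I_N | i \in A} -> bool}.

Definition merge N (A : {set 'I_N}) (a : partA A) (b : partA (~: A)) : config N :=
  [ffun i => match (insub i : option {j : 'I_N | j \in A}) with
             | Some s => a s
             | None => match (insub i : option {j : 'I_N | j \in ~: A}) with
                       | Some t => b t
                       | None => false
                       end
             end].

(* reduced density matrix rho_A = Tr_B |psi><psi| *)
Definition rhoA N (psi : qstate N) (A : {set 'I_N}) : 'M[C]_(#|{: partA A}|) :=
  \matrix_(r, c) \sum_(b : partA (~: A))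
      psi (merge (enum_val r) b) * (psi (merge (enum_val c) b))^*.

Definition schmidt_rank N (psi : qstate N) (A : {set 'I_N}) : nat := \rank (rhoA psi A).

(* vertex set 'I_m, adjacency relation adj, leaf labelling lab : qubits -> vertices *)
Definition degree m (adj : rel 'I_m) (v : 'I_m) : nat := #|[set w | adj v w]|.

Definition remove_edge m (adj : rel 'I_m) (u v : 'I_m) : rel 'I_m :=
  fun x y => adj x y && ~~ (((x == u) && (y == v)) || ((x == v) && (y == u))).

Definition is_tree m (adj : rel 'I_m) : Prop :=
  [/\ (0 < m)%N, symmetric adj, irreflexive adj,
      (forall x y, connect adj x y) &
      (forall u v, adj u v -> ~~ connect (remove_edge adj u v) u v)].

(* Subcubic tree whose leaves are identified with the qubits 1..N.
   Degrees are in {1,3}; the one-vertex tree (N = 1, a single leaf of degree 0)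
   is also admitted. Leaves = vertices of degree <= 1. *)
Definition subcubic_tree N m (adj : rel 'I_m) (lab : 'I_N -> 'I_m) : Prop :=
  [/\ is_tree adj,
      (forall v, [|| degree adj v == 1%N, degree adj v == 3%N | m == 1%N]),
      injective lab &
      (forall v, (degree adj v <= 1)%N <-> exists q, lab q = v)].

Definition side N m (adj : rel 'I_m) (lab : 'I_N -> 'I_m) (u v : 'I_m) : {set 'I_N} :=
  [set q | connect (remove_edge adj u v) u (lab q)].

(* max over edges of the Schmidt rank (the maximum of log2 is log2 of the maximum);
   1 is the neutral value (Schmidt ranks of nonzero vectors are >= 1). *)
Definition tree_width N (psi : qstate N) m (adj : rel 'I_m) (lab : 'I_N -> 'I_m) : nat :=
  \big[maxn/1%N]_(e : 'I_m * 'I_m | adj e.1 e.2) schmidt_rank psi (side adj lab e.1 e.2).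

Definition width_achievable N (psi : qstate N) (k : nat) : Prop :=
  exists m (adj : rel 'I_m) (lab : 'I_N -> 'I_m),
    subcubic_tree adj lab /\ tree_width psi adj lab = k.

Definition min_width N (psi : qstate N) : nat :=
  match pselect (exists k, `[< width_achievable psi k >]) with
  | left h => ex_minn h
  | right _ => 0%N
  end.

Definition log2 (x : R) : R := ln x / ln 2.

Definition chi_wd N (psi : qstate N) : R := log2 (min_width psi)%:R.

Definition bidx (b : bool) : 'I_2 := if b then ord_max else ord0.

(* action of the product operator  O_1 (x) ... (x) O_N  on a state *)
Definition apply_local N (Op : {ffun 'I_N -> 'M[C]_2}) (psi : qstate N) : qstate N :=
  [ffun x : config N => \sum_(y : config N)
               (\prod_(j < N) Op j (bidx (x j)) (bidx (y j))) * psi y].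

Definition adjoint (M : 'M[C]_2) : 'M[C]_2 := (map_mx Num.conj M)^T.

(* LOCC protocols on N qubits (no ancillas): a finite tree of rounds; in each
   round one party k performs a local measurement with Kraus operators
   M_0..M_{m-1}, broadcasts the outcome, and the rest of the protocol may
   depend on all outcomes so far. *)
Inductive locc (N : nat) : Type :=
| LDone : locc N
| LMeas (k : 'I_N) (m : nat) (M : 'I_m -> 'M[C]_2) (next : 'I_m -> locc N).

Fixpoint locc_valid N (P : locc N) : Prop :=
  match P with
  | LDone => True
  | LMeas k m M next =>
      \sum_(i < m) adjoint (M i) *m M i = 1%:M /\ forall i, locc_valid (next i)
  end.

(* the branches (outcome sequences) of a protocol, each as the product
   operator accumulated on each qubit (later operations act on the left) *)
Fixpoint branches N (P : locc N) : seq {ffun 'I_N -> 'M[C]_2} :=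
  match P with
  | LDone => [:: [ffun _ => 1%:M]]
  | LMeas k m M next =>
      flatten [seq [seq [ffun j => if j == k then Op j *m M i else Op j]
                   | Op : {ffun 'I_N -> 'M[C]_2} <- branches (next i)] | i <- enum 'I_m]
  end.

Definition branch_prob N (Op : {ffun 'I_N -> 'M[C]_2}) (psi : qstate N) : R :=
  norm2 (apply_local Op psi).
Definition branch_state N (Op : {ffun 'I_N -> 'M[C]_2}) (psi : qstate N) : qstate N :=
  [ffun x : config N => ((Num.sqrt (branch_prob Op psi))^-1)%:C%C * apply_local Op psi x].

(* |phi>^A |0>^{bar A}: the n-qubit state phi placed on the qubits f(0..n-1)
   (f injective), all other qubits in |0> *)
Definition embed n N (f : 'I_n -> 'I_N) (phi : qstate n) : qstate N :=
  [ffun x : config N => if [forall i, (i \notin codom f) ==> ~~ x i]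
             then phi [ffun j => x (f j)] else 0].

Definition slocc_convertible N n (psi : qstate N) (phi : qstate n) : Prop :=
  exists (f : 'I_n -> 'I_N) (P : locc N),
    [/\ injective f, locc_valid P &
        exists2 Op, Op \in branches P &
          branch_prob Op psi > 0 /\ branch_state Op psi = embed f phi].

Definition locc_geq N n (psi : qstate N) (phi : qstate n) : Prop :=
  exists (f : 'I_n -> 'I_N) (P : locc N),
    [/\ injective f, locc_valid P &
        \sum_(Op <- branches P | (branch_prob Op psi > 0) &&
                                `[< branch_state Op psi = embed f phi >])
           branch_prob Op psi = 1].

Definition typeI_monotone (M : forall N, qstate N -> R) : Prop :=
  forall N (psi : qstate N) (P : locc N), normalized psi -> locc_valid P ->
    M N psi >= \sum_(Op <- branches P | branch_prob Op psi > 0)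
                  branch_prob Op psi * M N (branch_state Op psi).

Definition typeII_monotone (E : forall N, qstate N -> R) : Prop :=
  forall N n (psi : qstate N) (phi : qstate n), (n <= N)%N ->
    normalized psi -> normalized phi -> locc_geq psi phi -> E N psi >= E n phi.

End QuantumDefs.

(* Main.v *)
Require Import Defs.
From HB Require Import structures.
From mathcomp Require Import all_boot all_order all_algebra.
From mathcomp Require Import boolp reals exp.
From mathcomp Require Import complex.
From mathcomp Require Import zify.
Import Order.TTheory GRing.Theory Num.Theory.
Set Implicit Arguments.
Unset Strict Implicit.
Unset Printing Implicit Defensive.

Section Gen.
Variable V : finType.
Definition gdeg (adj : rel V) (v : V) : nat := #|[set w | adj v w]|.
Definition grem (adj : rel V) (u v : V) : rel V :=
  fun x y => adj x y && ~~ (((x == u) && (y == v)) || ((x == v) && (y == u))).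
Definition gis_tree (adj : rel V) : Prop :=
  [/\ (0 < #|V|)%N, symmetric adj, irreflexive adj,
      (forall x y, connect adj x y) &
      (forall u v, adj u v -> ~~ connect (grem adj u v) u v)].
Definition gtreeX n (adj : rel V) (lab : 'I_n -> V) : Prop :=
  [/\ gis_tree adj, (forall v, [|| gdeg adj v == 1%N, gdeg adj v == 3%N | #|V| == 1%N]),
      injective lab & (forall q, gdeg adj (lab q) <= 1)%N].
Definition gtree n (adj : rel V) (lab : 'I_n -> V) : Prop :=
  gtreeX adj lab /\ (forall v, (gdeg adj v <= 1)%N -> exists q, lab q = v).
End Gen.

Definition refines (V1 V2 : finType) n (adj1 : rel V1) (lab1 : 'I_n -> V1)
  (adj2 : rel V2) (lab2 : 'I_n -> V2) : Prop :=
  forall x y, adj1 x y -> exists x2 y2, adj2 x2 y2 /\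
    forall q, connect (grem adj1 x y) x (lab1 q) = connect (grem adj2 x2 y2) x2 (lab2 q).

Lemma refines_trans (V1 V2 V3 : finType) n (a1 : rel V1) (l1 : 'I_n -> V1)
  (a2 : rel V2) (l2 : 'I_n -> V2) (a3 : rel V3) (l3 : 'I_n -> V3) :
  refines a1 l1 a2 l2 -> refines a2 l2 a3 l3 -> refines a1 l1 a3 l3.
Proof.
move=> H12 H23 x y /H12 [x2 [y2 [e2 E2]]].
have [x3 [y3 [e3 E3]]] := H23 _ _ e2.
exists x3, y3; split => // q; by rewrite E2 E3.
Qed.

Lemma connect_hom (T1 T2 : finType) (e1 : rel T1) (e2 : rel T2) (g : T1 -> T2) :
  (forall x y, e1 x y -> connect e2 (g x) (g y)) ->
  forall x y, connect e1 x y -> connect e2 (g x) (g y).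
Proof.
move=> H x y /connectP [p]; elim: p x => [|z p IH] x /=; first by move=> _ ->.
case/andP=> exz pz ly; exact: connect_trans (H _ _ exz) (IH _ pz ly).
Qed.

Lemma connect_bij (T1 T2 : finType) (e1 : rel T1) (e2 : rel T2) (h : T1 -> T2) (h' : T2 -> T1) :
  cancel h h' -> cancel h' h -> (forall x y, e1 x y = e2 (h x) (h y)) ->
  forall x y, connect e1 x y = connect e2 (h x) (h y).
Proof.
move=> hK h'K He x y; apply/idP/idP.
  by apply: connect_hom => u v; rewrite He => /connect1.
move=> /(connect_hom (g := h') _); rewrite !hK; apply.
by move=> u v euv; apply: connect1; rewrite He !h'K.
Qed.

Lemma connect_noout (T : finType) (e : rel T) x y :
  (forall z, ~~ e x z) -> connect e x y -> y = x.
Proof.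
move=> H /connectP [[|z p]] /=; first by move=> _ ->.
by case/andP=> /negP; rewrite (negbTE (H z)).
Qed.

Lemma grem_sym (V : finType) (adj : rel V) u v : symmetric adj -> symmetric (grem adj u v).
Proof.
move=> sa x y; rewrite /grem sa; congr (_ && ~~ _).
by rewrite orbC; congr (_ || _); rewrite andbC.
Qed.

Lemma grem_swap (V : finType) (adj : rel V) u v : grem adj u v =2 grem adj v u.
Proof. by move=> x y; rewrite /grem orbC. Qed.

Lemma card_bij (T1 T2 : finType) (h : T1 -> T2) (h' : T2 -> T1) (P : pred T2) :
  cancel h h' -> cancel h' h -> #|[set w | P (h w)]| = #|[set z | P z]|.
Proof.
move=> hK h'K; rewrite -(card_imset _ (can_inj hK)); apply: eq_card => z.
rewrite inE; apply/imsetP/idP.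
  by case=> w; rewrite inE => Pw ->.
by move=> Pz; exists (h' z); rewrite ?inE h'K.
Qed.

Section Transport.
Variables (V : finType) (n : nat) (adj : rel V) (lab : 'I_n -> V).
Local Notation m := #|V|.
Definition tadj : rel 'I_m := fun x y => adj (enum_val x) (enum_val y).
Definition tlab (q : 'I_n) : 'I_m := enum_rank (lab q).

Lemma tgrem x y u v : grem tadj x y u v = grem adj (enum_val x) (enum_val y) (enum_val u) (enum_val v).
Proof. by rewrite /grem /tadj !(inj_eq enum_val_inj). Qed.

Lemma tconnect x y u v : connect (grem tadj x y) u v =
   connect (grem adj (enum_val x) (enum_val y)) (enum_val u) (enum_val v).
Proof. apply: (connect_bij enum_valK enum_rankK) => a b; exact: tgrem. Qed.

Lemma tdeg v : degree tadj v = gdeg adj (enum_val v).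
Proof. exact: (card_bij (fun z => adj (enum_val v) z) enum_valK enum_rankK). Qed.

Lemma transport : gtree adj lab -> subcubic_tree tadj tlab /\ refines tadj tlab adj lab.
Proof.
case=> [[[m0 sa ia ca ba] dg il ll] lv]; split; last first.
  move=> x y exy; exists (enum_val x), (enum_val y); split => // q.
  by rewrite tconnect /tlab enum_rankK.
split.
- split => //.
  + by move=> x y; rewrite /tadj sa.
  + by move=> x; rewrite /tadj ia.
  + by move=> x y; rewrite (connect_bij (e2 := adj) enum_valK enum_rankK).
  + by move=> u v euv; rewrite tconnect; apply: ba.
- by move=> v; rewrite tdeg; apply: dg.
- by move=> q1 q2 /enum_rank_inj /il.
- move=> v; rewrite tdeg; split.
    by move=> /lv [q Hq]; exists q; rewrite /tlab Hq enum_valK.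
  by case=> q <-; rewrite /tlab enum_rankK ll.
Qed.
End Transport.

Definition PV (V : finType) (l p : V) := [pred v : V | (v != l) && (v != p)].

Section Remove.
Variables (V : finType) (n : nat) (adj : rel V) (lab : 'I_n -> V) (l p a b : V).
Hypotheses (sa : symmetric adj) (ia : irreflexive adj)
 (ba : forall u v, adj u v -> ~~ connect (grem adj u v) u v)
 (ca : forall x y, connect adj x y)
 (Nl : forall w, adj l w = (w == p))
 (Np : forall w, adj p w = [|| w == l, w == a | w == b])
 (la : l != a) (lb : l != b) (ab : a != b)
 (Hlab : forall q, PV l p (lab q)).
Local Notation V' := {v : V | PV l p v}.
Variable d : V'.
Hypothesis hd : val d = a.

Definition adjV : rel V := fun x y => [|| adj x y, (x == a) && (y == b) | (x == b) && (y == a)].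
Definition adj' : rel V' := fun x y => adjV (val x) (val y).
Definition pi (v : V) : V' := insubd d v.
Definition lab' q := pi (lab q).

Lemma adj_l u : adj u l = (u == p). Proof. by rewrite sa Nl. Qed.
Lemma adj_p u : adj u p = [|| u == l, u == a | u == b]. Proof. by rewrite sa Np. Qed.
Lemma pa : adj p a. Proof. by rewrite Np eqxx orbT. Qed.
Lemma pb : adj p b. Proof. by rewrite Np eqxx !orbT. Qed.
Lemma lp : adj l p. Proof. by rewrite Nl. Qed.
Lemma neq_pa : (p == a) = false.
Proof. apply/negbTE/eqP => e; move: pa; by rewrite -e ia. Qed.
Lemma neq_pb : (p == b) = false.
Proof. apply/negbTE/eqP => e; move: pb; by rewrite -e ia. Qed.
Lemma neq_lp : (l == p) = false.
Proof. apply/negbTE/eqP => e; move: lp; by rewrite -e ia. Qed.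
Lemma Pa : PV l p a. Proof. by rewrite inE eq_sym la eq_sym neq_pa. Qed.
Lemma Pb : PV l p b. Proof. by rewrite inE eq_sym lb eq_sym neq_pb. Qed.
Lemma pv (z : V') : (val z == p) = false.
Proof. by have := valP z; rewrite inE => /andP [_ /negbTE]. Qed.
Lemma lv (z : V') : (val z == l) = false.
Proof. by have := valP z; rewrite inE => /andP [/negbTE ->]. Qed.
Lemma vp (z : V') : (p == val z) = false. Proof. by rewrite eq_sym pv. Qed.

Lemma nab : ~~ adj a b.
Proof.
apply/negP => hab; have := ba pa; apply/negP/negPn.
apply: (connect_trans (y := b)); apply: connect1; rewrite /grem.
  by rewrite pb eqxx (eq_sym b a) (negbTE ab) neq_pa.
by rewrite sa hab (eq_sym b p) neq_pb (eq_sym b a) (negbTE ab).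
Qed.
Lemma nba : ~~ adj b a. Proof. by rewrite sa nab. Qed.

Lemma pi_val x : pi (val x) = x. Proof. exact: valKd. Qed.
Lemma pi_out v : ~~ PV l p v -> pi v = d.
Proof. by move=> h; apply: val_inj; rewrite val_insubd (negbTE h). Qed.
Lemma val_pi v : PV l p v -> val (pi v) = v.
Proof. by move=> h; rewrite val_insubd h. Qed.
Lemma pi_a : pi a = d. Proof. by apply: val_inj; rewrite val_pi ?hd // Pa. Qed.
Lemma val_lab q : val (lab' q) = lab q. Proof. exact: val_pi. Qed.

Lemma lift1 (x0 y0 : V') u v : connect (grem adj' x0 y0) u v ->
  connect (grem adj (val x0) (val y0)) (val u) (val v).
Proof.
apply: connect_hom => {u v} u v; rewrite /grem /adj' /adjV -!val_eqE.
case/andP => /or3P [h|/andP[/eqP -> /eqP ->]|/andP[/eqP -> /eqP ->]] hn.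
- by apply: connect1; rewrite h hn.
- apply: (connect_trans (y := p)); apply: connect1.
    by rewrite adj_p eqxx orbT !vp /= !andbF.
  by rewrite pb !vp.
- apply: (connect_trans (y := p)); apply: connect1.
    by rewrite adj_p eqxx !orbT !vp /= !andbF.
  by rewrite pa !vp.
Qed.

Lemma lift2 (y0 : V') u v : val y0 = b -> connect (grem adj' d y0) u v ->
  connect (grem adj p b) (val u) (val v).
Proof.
move=> hy; apply: connect_hom => {u v} u v; rewrite /grem /adj' /adjV -!val_eqE hd hy.
case/andP => /or3P [h|h|h].
- by move=> _; apply: connect1; rewrite /grem h !pv /= andbF.
- by case/andP: h => /eqP -> /eqP ->; rewrite !eqxx.
- by case/andP: h => /eqP -> /eqP ->; rewrite !eqxx orbT.
Qed.

Lemma proj (e : rel V) (e' : rel V') : symmetric e -> symmetric e' ->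
  (forall u v, e u v -> adj u v) -> (forall u v : V', e (val u) (val v) -> e' u v) ->
  (e p b -> e' d (pi b)) -> forall u v, connect e u v -> connect e' (pi u) (pi v).
Proof.
move=> se se' sub hin hpb.
have K : forall u v, e u v -> ~~ PV l p u -> connect e' (pi u) (pi v).
  move=> u v euv Pu; have auv := sub _ _ euv.
  move: Pu; rewrite inE negb_and !negbK => /orP [/eqP eu|/eqP eu].
    move: auv; rewrite eu Nl => /eqP ev.
    by rewrite ev !pi_out ?connect0 // inE ?eqxx ?andbF.
  move: (auv); rewrite eu Np => /or3P [/eqP ev|/eqP ev|/eqP ev].
  - by rewrite ev !pi_out ?connect0 // inE ?eqxx ?andbF.
  - by rewrite ev pi_a pi_out ?connect0 // inE ?eqxx ?andbF.
  - by rewrite ev pi_out ?inE ?eqxx ?andbF //; apply: connect1; apply: hpb; rewrite -eu -ev.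
apply: connect_hom => u v euv.
case Pu: (PV l p u); last by apply: K => //; rewrite Pu.
case Pv: (PV l p v); last first.
  rewrite (sym_connect_sym se'); apply: K; rewrite ?Pv //; by rewrite se.
apply: connect1; apply: hin; by rewrite !val_pi.
Qed.

Lemma adj'_sym : symmetric adj'.
Proof.
move=> x y; rewrite /adj' /adjV sa.
by case: (adj _ _); case: (val x == a); case: (val y == b); case: (val x == b); case: (val y == a).
Qed.

Lemma adj'_irr : irreflexive adj'.
Proof.
move=> x; rewrite /adj' /adjV ia /=; apply/negP; case/orP=> /andP [/eqP -> /eqP e].
  by move: ab; rewrite e eqxx.
by move: ab; rewrite e eqxx.
Qed.

Lemma adj'_conn x y : connect adj' x y.
Proof.
have cp : forall u v, connect adj u v -> connect adj' (pi u) (pi v).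
  apply: proj => //.
  - exact: adj'_sym.
  - by move=> u v h; rewrite /adj' /adjV h.
  - by move=> _; rewrite /adj' /adjV hd val_pi ?Pb // !eqxx orbT.
by rewrite -(pi_val x) -(pi_val y); apply: cp.
Qed.

Lemma bridge_ab x y : val x = a -> val y = b -> ~~ connect (grem adj' x y) x y.
Proof.
move=> hx hy; have -> : x = d by apply: val_inj; rewrite hx hd.
apply/negP => /(lift2 hy); rewrite hd hy => c.
have := ba pb; apply/negP/negPn.
apply: (connect_trans (y := a)) c; apply: connect1.
by rewrite /grem pa eqxx (negbTE ab) neq_pb.
Qed.

Lemma adj'_bridge x y : adj' x y -> ~~ connect (grem adj' x y) x y.
Proof.
rewrite {1}/adj' /adjV => /or3P [h|/andP[/eqP hx /eqP hy]|/andP[/eqP hx /eqP hy]].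
- apply/negP => /lift1 c; move: (ba h); by rewrite c.
- exact: bridge_ab.
- rewrite (eq_connect (grem_swap adj' x y)) (sym_connect_sym (grem_sym _ _ adj'_sym)).
  exact: bridge_ab.
Qed.

Lemma card_val (Q : pred V) : #|[set y : V' | Q (val y)]| = #|[set w | Q w && PV l p w]|.
Proof.
rewrite -(card_imset _ val_inj); apply: eq_card => w; rewrite inE.
apply/imsetP/idP.
  by case=> y; rewrite inE => Qy ->; rewrite Qy (valP y).
by case/andP => Qw Pw; exists (Sub w Pw); rewrite ?inE SubK.
Qed.

Lemma nbr_l u : adj u l -> u = p. Proof. by rewrite adj_l => /eqP. Qed.

Lemma deg_gen (x : V') a1 b1 : val x = a1 -> adj p a1 -> PV l p b1 -> ~~ adj a1 b1 ->
  (forall w, adjV a1 w = adj a1 w || (w == b1)) -> gdeg adj' x = gdeg adj (val x).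
Proof.
move=> hx pa1 Pb1 nab1 hV.
rewrite /gdeg (card_val (fun w => adjV (val x) w)) hx.
have -> : [set w | adjV a1 w && PV l p w] = b1 |: ([set w | adj a1 w] :\ p).
  apply/setP => w; rewrite !inE hV.
  have [->|nb] := eqVneq w b1; first by rewrite orbT /=; move: Pb1; rewrite inE => /andP [-> ->].
  rewrite orbF; have [->|np] := eqVneq w p; first by rewrite !andbF.
  rewrite /= andbT.
  case h: (adj a1 w) => //=; apply/eqP => wl; move: h; rewrite wl => /nbr_l e; move: pa1; by rewrite -e ia.
rewrite cardsU1 !inE (negbTE nab1) /=.
by rewrite andbF [in RHS](cardsD1 p) inE sa pa1.
Qed.

Lemma deg'_eq x : gdeg adj' x = gdeg adj (val x).
Proof.
have [hx|na] := eqVneq (val x) a.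
  apply: (deg_gen hx pa Pb nab) => w.
  by rewrite /adjV eqxx (negbTE ab) /= orbF.
have [hx|nb] := eqVneq (val x) b.
  apply: (deg_gen hx pb Pa nba) => w.
  by rewrite /adjV eqxx (eq_sym b a) (negbTE ab) /=.
rewrite /gdeg (card_val (fun w => adjV (val x) w)); apply: eq_card => w; rewrite !inE.
rewrite /adjV (negbTE na) (negbTE nb) /= orbF.
case h: (adj (val x) w) => //=.
apply/andP; split; apply/eqP => e; move: h; rewrite e.
  by move/nbr_l/eqP; rewrite pv.
by rewrite adj_p (negbTE na) (negbTE nb) lv.
Qed.

Lemma rem_tree : gis_tree adj'.
Proof.
split.
- by apply/card_gt0P; exists d.
- exact: adj'_sym.
- exact: adj'_irr.
- exact: adj'_conn.
- exact: adj'_bridge.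
Qed.

Lemma lab'_inj : injective lab -> injective lab'.
Proof. by move=> il q1 q2 e; apply: il; rewrite -!val_lab e. Qed.

Lemma side_old x y : adj (val x) (val y) -> forall q,
  connect (grem adj' x y) x (lab' q) = connect (grem adj (val x) (val y)) (val x) (lab q).
Proof.
move=> h q; apply/idP/idP; first by move/lift1; rewrite val_lab.
move=> c; suff: connect (grem adj' x y) (pi (val x)) (pi (lab q)) by rewrite pi_val.
apply: (proj _ _ _ _ _ c).
- exact: grem_sym.
- exact: (grem_sym _ _ adj'_sym).
- by move=> u v /andP [].
- by move=> u v; rewrite /grem /adj' /adjV -!val_eqE => /andP [-> ->].
- move=> _; rewrite /grem /adj' /adjV hd val_pi ?Pb // !eqxx orbT /= -!val_eqE hd val_pi ?Pb //.
  apply/negP; case/orP => /andP [/eqP e1 /eqP e2]; move: h; rewrite -e1 -e2.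
    by rewrite (negbTE nab).
  by rewrite (negbTE nba).
Qed.

Lemma side_ab x y : val x = a -> val y = b -> forall q,
  connect (grem adj' x y) x (lab' q) = connect (grem adj p b) p (lab q).
Proof.
move=> hx hy q; have ex : x = d by apply: val_inj; rewrite hx hd.
apply/idP/idP.
  rewrite ex => /(lift2 hy); rewrite hd val_lab => c.
  apply: (connect_trans (y := a)) c; apply: connect1.
  by rewrite /grem pa eqxx (negbTE ab) neq_pb.
move=> c; suff: connect (grem adj' x y) (pi p) (pi (lab q)).
  by rewrite pi_out ?ex // inE eqxx andbF.
apply: (proj _ _ _ _ _ c).
- exact: grem_sym.
- exact: (grem_sym _ _ adj'_sym).
- by move=> u v /andP [].
- move=> u v; rewrite /grem /adj' /adjV -!val_eqE hx hy => /andP [h _].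
  rewrite h /=; apply/negP; case/orP => /andP [/eqP e1 /eqP e2].
    by move: nab; rewrite -e1 -e2 => /negP; apply; exact: h.
  by move: nba; rewrite -e1 -e2 => /negP; apply; exact: h.
- by rewrite /grem !eqxx /= andbF.
Qed.

End Remove.

Lemma connect_closedS (T : finType) (e : rel T) (S : pred T) x y :
  (forall u v, e u v -> S u -> S v) -> connect e x y -> S x -> S y.
Proof.
move=> H /connectP [p]; elim: p x => [|z p IH] x /=; first by move=> _ ->.
case/andP=> exz pz ly Sx; exact: IH _ pz ly (H _ _ exz Sx).
Qed.

Lemma set1_eq (T : finType) (P : pred T) z : [set w | P w] = [set z] -> forall w, P w = (w == z).
Proof. by move=> E w; have := congr1 (fun S : {set T} => w \in S) E; rewrite !inE. Qed.

Lemma card_sig_lt (T : finType) (P : pred T) x : ~~ P x -> (#|{: {y | P y}}| < #|T|)%N.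
Proof.
move=> Px; rewrite card_sig; apply: proper_card; apply/properP; split.
  by apply/subsetP.
by exists x.
Qed.

Theorem remove_leaf (V : finType) n (adj : rel V) (lab : 'I_n -> V) :
  (1 < n)%N -> gtreeX adj lab -> forall l, (gdeg adj l <= 1)%N -> l \notin codom lab ->
  exists (V' : finType) (adj' : rel V') (lab' : 'I_n -> V'),
    [/\ (#|V'| < #|V|)%N, gtreeX adj' lab' & refines adj' lab' adj lab].
Proof.
move=> hn [[V0 sa ia ca ba] dg il ll] l hl hc.
have n0 : (0 < n)%N by lia.
pose q0 : 'I_n := Ordinal n0; pose q1 : 'I_n := Ordinal hn.
have q01 : lab q0 != lab q1.
  by apply/eqP => /il /(congr1 val).
have V1 : #|V| != 1%N.
  apply/negP => /fintype1P [z hz]; move: q01; by rewrite (hz (lab q0)) (hz (lab q1)) eqxx.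
have dl : gdeg adj l = 1%N.
  move: (dg l) hl; rewrite (negbTE V1) orbF => /orP [/eqP -> //|/eqP ->] //.
have [p Ep] : exists p, [set w | adj l w] = [set p] by apply/cards1P/eqP.
have Nl := set1_eq Ep.
have hcl : forall q, lab q != l.
  by move=> q; apply/eqP => e; move: hc; rewrite -e codom_f.
have alp : adj l p by rewrite Nl.
have apl : adj p l by rewrite sa.
have dp : gdeg adj p = 3%N.
  move: (dg p); rewrite (negbTE V1) orbF => /orP [/eqP d1|/eqP -> //].
  have [z Ez] : exists z, [set w | adj p w] = [set z] by apply/cards1P/eqP.
  have Np := set1_eq Ez.
  have zl : l = z by apply/eqP; rewrite -Np.
  have Hs : forall v, v \in [set l; p].
    move=> v; apply: (connect_closedS (S := fun v => v \in [set l; p]) _ (ca l v)).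
      move=> u w auw; rewrite !inE => /orP [/eqP eu|/eqP eu]; move: auw; rewrite eu.
        by rewrite Nl => ->; rewrite orbT.
      by rewrite Np -zl => ->.
    by rewrite !inE eqxx.
  move: (Hs (lab q0)) (Hs (lab q1)); rewrite !inE !(negbTE (hcl _)) /= => /eqP e0 /eqP e1.
  by move: q01; rewrite e0 e1 eqxx.
pose S := [set w | adj p w] :\ l.
have cS : #|S| == 2%N.
  have E := cardsD1 l [set w | adj p w]; rewrite inE apl /= add1n in E.
  by move: dp; rewrite /gdeg E => [[->]].
have [a [b [ab ES]]] := cards2P _ cS.
have inS : forall w, (w \in S) = (w != l) && adj p w by move=> w; rewrite !inE.
have Np : forall w, adj p w = [|| w == l, w == a | w == b].
  move=> w; have [->|nl] := eqVneq w l; first by rewrite apl.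
  by move: (inS w); rewrite ES !inE nl /= => ->.
have la : l != a by move: (inS a); rewrite ES !inE eqxx /= eq_sym => /esym /andP [].
have lb : l != b by move: (inS b); rewrite ES !inE eqxx orbT eq_sym => /esym /andP [].
have Hlab : forall q, PV l p (lab q).
  move=> q; rewrite inE hcl /=; apply/eqP => e.
  by move: (ll q); rewrite e dp.
have pa : adj p a by rewrite Np eqxx orbT.
have pb : adj p b by rewrite Np eqxx !orbT.
have Pa : PV l p a by rewrite inE eq_sym la /=; apply/eqP => e; move: pa; rewrite e ia.
have Pb : PV l p b by rewrite inE eq_sym lb /=; apply/eqP => e; move: pb; rewrite e ia.
pose d : {v : V | PV l p v} := Sub a Pa.
pose d' : {v : V | PV l p v} := Sub b Pb.
have hd : val d = a by rewrite SubK.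
have hd' : val d' = b by rewrite SubK.
have ba' : b != a by rewrite eq_sym.
have Np' : forall w, adj p w = [|| w == l, w == b | w == a].
  by move=> w; rewrite Np; case: (w == l); case: (w == a); case: (w == b).
exists {v : V | PV l p v}, (@adj' V adj l p a b), (@lab' V n lab l p d).
split.
- by apply: (card_sig_lt (x := l)); rewrite inE eqxx.
- split.
  + by apply: (@rem_tree V adj l p a b) => //; exact: hd.
  + move=> x; rewrite (@deg'_eq V adj l p a b) //.
    by move: (dg (val x)); rewrite (negbTE V1) orbF => /orP [->|->]; rewrite ?orbT.
  + by apply: lab'_inj.
  + move=> q; rewrite (@deg'_eq V adj l p a b) // val_lab //.
- move=> x y; rewrite {1}/adj' /adjV => /or3P [h|/andP[/eqP hx /eqP hy]|/andP[/eqP hx /eqP hy]].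
  + exists (val x), (val y); split => // q; by apply: side_old.
  + exists p, b; split => // q; by apply: side_ab.
  + exists p, a; split => // q.
    have E1 : @adj' V adj l p a b =2 @adj' V adj l p b a.
      move=> u v; rewrite /adj' /adjV.
      by case: (_ == a); case: (_ == b); case: (_ == a); case: (_ == b); rewrite ?orbT ?orbF.
    have E2 : @lab' V n lab l p d q = @lab' V n lab l p d' q.
      by apply: val_inj; rewrite !val_lab.
    rewrite E2 (@eq_connect _ _ (grem (@adj' V adj l p b a) x y)); last first.
      by move=> u v; rewrite /grem E1.
    by apply: side_ab.
Qed.

Lemma refines_refl (V : finType) n (adj : rel V) (lab : 'I_n -> V) : refines adj lab adj lab.
Proof. by move=> x y h; exists x, y; split. Qed.

Theorem reduce n : (1 < n)%N -> forall k (V : finType) (adj : rel V) (lab : 'I_n -> V),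
  (#|V| <= k)%N -> gtreeX adj lab ->
  exists (V' : finType) (adj' : rel V') (lab' : 'I_n -> V'),
    gtree adj' lab' /\ refines adj' lab' adj lab.
Proof.
move=> hn; elim=> [|k IH] V adj lab hk ht.
  by case: ht => [[V0 _ _ _ _] _ _ _]; move: hk; rewrite leqn0 => /eqP e; rewrite e in V0.
case: (pickP [pred v | (gdeg adj v <= 1)%N && (v \notin codom lab)]) => [l /andP [hl hc]|none].
  have [V' [adj' [lab' [lt ht' rf]]]] := remove_leaf hn ht hl hc.
  have [V'' [adj'' [lab'' [ht'' rf']]]] := IH V' adj' lab' (leq_trans lt hk) ht'.
  exists V'', adj'', lab''; split => //; exact: refines_trans rf' rf.
exists V, adj, lab; split; last exact: refines_refl.
split => // v hv; move: (none v); rewrite /= hv /= => /negbFE /codomP [q ->].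
by exists q.
Qed.

Lemma card_sum_set (T1 T2 : finType) (P : pred (T1 + T2)) :
  #|[set w | P w]| = (#|[set x | P (inl x)]| + #|[set y | P (inr y)]|)%N.
Proof.
rewrite -!sum1_card big_sumType; congr (_ + _)%N; apply: eq_bigl => x; by rewrite !inE.
Qed.

Lemma inl_eq (T1 T2 : eqType) (x y : T1) : (inl x == inl y :> T1 + T2) = (x == y).
Proof. by apply/eqP/eqP => [[]|->]. Qed.

Lemma base_tree : exists (V : finType) (adj : rel V) (lab : 'I_2 -> V), gtree adj lab.
Proof.
exists bool, (fun x y => x != y), (fun q : 'I_2 => val q == 1%N).
have dg : forall v : bool, gdeg (fun x y => x != y) v = 1%N.
  move=> v; rewrite /gdeg (_ : [set w | v != w] = [set ~~ v]) ?cards1 //.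
  by apply/setP => w; rewrite !inE; case: v; case: w.
split; first split.
- split.
  + by rewrite card_bool.
  + by move=> x y; rewrite eq_sym.
  + by move=> x; rewrite eqxx.
  + move=> x y; have [->|nxy] := eqVneq x y; first exact: connect0.
    exact: connect1.
  + move=> u v huv; apply/negP => /connect_noout h.
    suff : v = u by move=> e; move: huv; rewrite e eqxx.
    apply: h => z; rewrite /grem; move: huv.
    by case: u; case: v; case: z.
- by move=> v; rewrite dg.
- move=> q1 q2; case: q1 => [[|[|?]] ?]; case: q2 => [[|[|?]] ?] //= _; exact: val_inj.
- by move=> q; rewrite dg.
- move=> v _; case: v.
    by exists (Ordinal (isT : (1 < 2)%N)).
  by exists (Ordinal (isT : (0 < 2)%N)).
Qed.

Section Grow.
Variables (V : finType) (N : nat) (adj : rel V) (lab : 'I_N -> V) (q0 : 'I_N).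
Hypotheses (hN : (1 < N)%N) (ht : gtree adj lab).
Local Notation v0 := (lab q0).

Definition adj2 : rel (V + bool) := fun x y =>
  match x, y with
  | inl u, inl v => adj u v
  | inl u, inr _ => u == v0
  | inr _, inl v => v == v0
  | inr _, inr _ => false
  end.

Definition lab2 (q : 'I_N.+1) : V + bool :=
  match unlift ord_max q with
  | Some q' => if q' == q0 then inr false else inl (lab q')
  | None => inr true
  end.

Lemma grow_tree : gtree adj2 lab2.
Proof.
case: ht => [[[V0 sa ia ca ba] dg il ll] lv].
have n0 : (0 < N)%N by lia.
have V1 : #|V| != 1%N.
  apply/negP => /fintype1P [z hz].
  have := il (Ordinal n0) (Ordinal hN); rewrite (hz (lab (Ordinal n0))) (hz (lab (Ordinal hN))).
  by move=> /(_ erefl) /(congr1 val).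
have dv0 : gdeg adj v0 = 1%N.
  by move: (dg v0) (ll q0); rewrite (negbTE V1) orbF => /orP [/eqP ->|/eqP ->].
have s2 : symmetric adj2 by case=> [u|c] [v|c'] //=; rewrite sa.
have deg_l : forall v, gdeg adj2 (inl v) = (gdeg adj v + (v == v0) * 2)%N.
  move=> v; rewrite /gdeg card_sum_set /=; congr (_ + _)%N.
  by case: (v == v0); rewrite ?cardsT ?card_bool ?cards0 // (_ : [set _ | false] = set0) ?cards0 //; apply/setP.
have deg_r : forall c, gdeg adj2 (inr c) = 1%N.
  move=> c; rewrite /gdeg card_sum_set /= (_ : [set _ | false] = set0); last by apply/setP.
  by rewrite cards0 addn0 (_ : [set x | x == v0] = [set v0]) ?cards1 //; apply/setP => x; rewrite !inE.
have cinl : forall u v, connect adj u v -> connect adj2 (inl u) (inl v).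
  by apply: (connect_hom (g := inl)) => u v h; apply: connect1.
have c0 : forall x, connect adj2 x (inl v0).
  case=> [u|c]; first exact: cinl.
  by apply: connect1 => /=.
have cs := sym_connect_sym s2.
have lab2_inl : forall q v, lab2 q = inl v -> exists2 q', q' != q0 & v = lab q'.
  move=> q v; rewrite /lab2; case: unliftP => [q'|] //= _.
  by case: eqP => // nq [<-]; exists q' => //; apply/eqP.
have lab2_r : forall q', q' != q0 -> lab2 (lift ord_max q') = inl (lab q').
  by move=> q' nq; rewrite /lab2 liftK (negbTE nq).
split; first split.
- split.
  + by apply/card_gt0P; exists (inr true).
  + exact: s2.
  + by case=> [u|c] //=; rewrite ia.
  + by move=> x y; apply: (connect_trans (c0 x)); rewrite cs c0.
  + case=> [u|c] [v|c'] //= huv.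
    * apply/negP => c.
      have : connect (grem adj u v) u v.
        apply: (connect_hom (e2 := grem adj u v) (g := fun z => if z is inl w then w else v0)) _ _ _ c.
        case=> [a|ca'] [b|cb] //= h.
        - by apply: connect1.
        - by move: h => /andP [/eqP -> _].
        - by move: h => /andP [/eqP -> _].
      by rewrite (negbTE (ba u v huv)).
    * move/eqP: huv => ->; apply/negP; rewrite (sym_connect_sym (grem_sym _ _ s2)).
      move/connect_noout => h; suff : inl v0 = inr c' :> V + bool by [].
      by apply: h; case=> [w|c''] //=; rewrite /grem /= eqxx inl_eq; case: (w == v0).
    * move/eqP: huv => ->; apply/negP.
      move/connect_noout => h; suff : inl v0 = inr c :> V + bool by [].
      by apply: h; case=> [w|c''] //=; rewrite /grem /= eqxx inl_eq; case: (w == v0).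
- have W1 : (#|{: V + bool}| == 1%N) = false by rewrite card_sum card_bool addn2.
  case=> [v|c]; last by rewrite deg_r.
  rewrite deg_l W1 orbF; have [->|nv] := eqVneq v v0.
    by rewrite dv0.
  by rewrite mul0n addn0; move: (dg v); rewrite (negbTE V1) orbF.
- move=> q1 q2; rewrite /lab2.
  case: unliftP => [q1'|] -> ; case: unliftP => [q2'|] -> //=.
  + case: eqVneq => [->|n1]; case: eqVneq => [->|n2] //=; first by move=> [/il ->].
  + by case: eqP.
  + by case: eqP.
- move=> q; rewrite /lab2; case: unliftP => [q'|] _; last by rewrite deg_r.
  case: eqVneq => [_|nq]; first by rewrite deg_r.
  rewrite deg_l (_ : (lab q' == v0) = false) ?addn0 ?ll //.
  by apply/negbTE; apply: contra nq => /eqP /il ->.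
- case=> [v|c].
    rewrite deg_l; have [->|nv] := eqVneq v v0; first by rewrite dv0.
    rewrite mul0n addn0 => /lv [q' eq'].
    have nq : q' != q0 by apply: contra nv => /eqP e; rewrite -eq' e.
    by exists (lift ord_max q'); rewrite lab2_r // eq'.
  case: c => _.
    by exists ord_max; rewrite /lab2 unlift_none.
  by exists (lift ord_max q0); rewrite /lab2 liftK eqxx.
Qed.
End Grow.

Lemma exists_gtree N : (1 < N)%N -> exists (V : finType) (adj : rel V) (lab : 'I_N -> V), gtree adj lab.
Proof.
elim: N => [|N IH] //; case: (ltnP 1 N) => [hN _|].
  have [V [adj [lab ht]]] := IH hN.
  have n0 : (0 < N)%N by lia.
  exists (V + bool)%type, (adj2 adj lab (Ordinal n0)), (lab2 lab (Ordinal n0)).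
  exact: grow_tree.
move=> h1 h2; have -> : N = 1%N by lia.
exact: base_tree.
Qed.

Lemma subcubic_gtreeX N n m (adj : rel 'I_m) (lab : 'I_N -> 'I_m) (f : 'I_n -> 'I_N) :
  subcubic_tree adj lab -> injective f -> gtreeX adj (fun q => lab (f q)).
Proof.
case=> [[m0 sa ia ca ba] dg il ll] hf; split.
- by split; rewrite ?card_ord.
- by move=> v; rewrite card_ord; apply: dg.
- by move=> q1 q2 /il /hf.
- by move=> q; apply/ll; exists (f q).
Qed.

Theorem restrict_tree N n m (adj : rel 'I_m) (lab : 'I_N -> 'I_m) (f : 'I_n -> 'I_N) :
  subcubic_tree adj lab -> injective f -> (1 < n)%N ->
  exists m' (adj' : rel 'I_m') (lab' : 'I_n -> 'I_m'), subcubic_tree adj' lab' /\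
    forall x y, adj' x y -> exists u v, adj u v /\
      Defs.side adj' lab' x y = [set q | f q \in Defs.side adj lab u v].
Proof.
move=> ht hf hn.
have [V' [adj' [lab' [ht' rf]]]] := reduce hn (leqnn _) (subcubic_gtreeX ht hf).
have [hs rf2] := transport ht'.
exists #|V'|, (tadj adj'), (tlab lab'); split => // x y exy.
have [u [v [euv E]]] := refines_trans rf2 rf exy.
exists u, v; split => //; apply/setP => q; rewrite !inE; exact: E.
Qed.

Theorem exists_subcubic N : (1 < N)%N ->
  exists m (adj : rel 'I_m) (lab : 'I_N -> 'I_m), subcubic_tree adj lab.
Proof.
move=> hN; have [V [adj [lab ht]]] := exists_gtree hN.
have [hs _] := transport ht.
by exists #|V|, (tadj adj), (tlab lab).
Qed.

Local Open Scope ring_scope.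
Local Notation merge := Defs.merge.

Section Merge.
Variables (N : nat) (A : {set 'I_N}).
Local Notation SA := {i : 'I_N | i \in A}.
Local Notation SB := {i : 'I_N | i \in ~: A}.

Lemma mgA (a : partA A) (b : partA (~: A)) (s : SA) : merge a b (val s) = a s.
Proof. by rewrite /merge ffunE valK. Qed.

Lemma mgB (a : partA A) (b : partA (~: A)) (t : SB) : merge a b (val t) = b t.
Proof.
rewrite /merge ffunE insubN ?valK //.
by have := valP t; rewrite inE.
Qed.

Definition splitA (x : config N) : partA A := [ffun s : SA => x (val s)].
Definition splitB (x : config N) : partA (~: A) := [ffun t : SB => x (val t)].

Lemma mgK x : merge (splitA x) (splitB x) = x.
Proof.
apply/ffunP => i; case: (boolP (i \in A)) => hi.
  by move: (mgA (splitA x) (splitB x) (Sub i hi)); rewrite SubK => ->; rewrite ffunE SubK.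
have hi' : i \in ~: A by rewrite inE.
by move: (mgB (splitA x) (splitB x) (Sub i hi')); rewrite SubK => ->; rewrite ffunE SubK.
Qed.

Lemma splitAK a b : splitA (merge a b) = a.
Proof. by apply/ffunP => s; rewrite ffunE mgA. Qed.
Lemma splitBK a b : splitB (merge a b) = b.
Proof. by apply/ffunP => s; rewrite ffunE mgB. Qed.

Lemma mg_eq (x y1 y2 : config N) :
  (forall s : SA, x (val s) = y1 (val s)) -> (forall t : SB, x (val t) = y2 (val t)) ->
  x = merge (splitA y1) (splitB y2).
Proof.
move=> h1 h2; rewrite -[x]mgK; congr merge; apply/ffunP => s; by rewrite !ffunE.
Qed.

Lemma sum_config (T : nmodType) (F : config N -> T) :
  \sum_(y : config N) F y = \sum_(a : partA A) \sum_(b : partA (~: A)) F (merge a b).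
Proof.
rewrite pair_big /=.
rewrite (reindex (fun ab : partA A * partA (~: A) => merge ab.1 ab.2)) //.
exists (fun y => (splitA y, splitB y)) => [[a b] _|y _] /=.
  by rewrite splitAK splitBK.
exact: mgK.
Qed.

Lemma prod_split (T : comPzSemiRingType) (G : 'I_N -> T) :
  \prod_(j < N) G j = (\prod_(s : SA) G (val s)) * \prod_(t : SB) G (val t).
Proof.
rewrite (bigID (fun j => j \in A)) /=; congr (_ * _).
  by rewrite -big_sub.
rewrite -big_sub; apply: eq_bigl => j; by rewrite inE.
Qed.

End Merge.

Section Rank.
Variable C : numClosedFieldType.

Definition hadj p q (X : 'M[C]_(p, q)) : 'M[C]_(q, p) := (map_mx Num.conj X)^T.

Lemma mxmx_adj0 p q (Y : 'M[C]_(p, q)) : Y *m hadj Y = 0 -> Y = 0.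
Proof.
move=> h; apply/matrixP => i j; rewrite mxE.
have := congr1 (fun M : 'M[C]_(p, p) => M i i) h; rewrite !mxE => /eqP.
rewrite psumr_eq0; last by move=> k _; rewrite !mxE mul_conjC_ge0.
move=> /allP /(_ j (mem_index_enum j)) /implyP /(_ isT).
by rewrite !mxE mul_conjC_eq0 => /eqP.
Qed.

Lemma rank_mxadj p q (X : 'M[C]_(p, q)) : \rank (X *m hadj X) = \rank X.
Proof.
apply/eqP; rewrite eqn_leq mxrankM_maxl /=.
have sub : (kermx (X *m hadj X) <= kermx X)%MS.
  rewrite sub_kermx; apply/eqP; apply: mxmx_adj0.
  have : kermx (X *m hadj X) *m (X *m hadj X) = 0 by apply/eqP; rewrite -sub_kermx.
  rewrite /hadj mulmxA => h.
  rewrite map_mxM trmx_mul mulmxA (_ : _ *m X *m _ = 0) ?mul0mx //; exact: h.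
have := mxrankS sub; rewrite !mxrank_ker.
have := rank_leq_row X; have := rank_leq_row (X *m hadj X).
move=> h1 h2 h3; lia.
Qed.
End Rank.

Section Coef.
Variable R : realType.
Local Notation C := (R[i]).

Definition cmx N (psi : qstate R N) (A : {set 'I_N}) :
  'M[C]_(#|{: partA A}|, #|{: partA (~: A)}|) :=
  \matrix_(r, c) psi (merge (enum_val r) (enum_val c)).

Lemma sum_enum (T : finType) (V : nmodType) (F : T -> V) :
  \sum_(t : T) F t = \sum_(k < #|{: T}|) F (enum_val k).
Proof. by rewrite (reindex (@enum_val T predT)) //; apply: onW_bij; exact: enum_val_bij. Qed.

Lemma rhoA_cmx N (psi : qstate R N) A : rhoA psi A = cmx psi A *m hadj (cmx psi A).
Proof.
apply/matrixP => r c; rewrite !mxE sum_enum; apply: eq_bigr => k _.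
by rewrite !mxE.
Qed.

Lemma schmidt_cmx N (psi : qstate R N) A : schmidt_rank psi A = \rank (cmx psi A).
Proof. by rewrite /schmidt_rank rhoA_cmx rank_mxadj. Qed.


Definition LA N (Op : {ffun 'I_N -> 'M[C]_2}) (A : {set 'I_N}) : 'M[C]_#|{: partA A}| :=
  \matrix_(r, r') \prod_(s : {i : 'I_N | i \in A})
      Op (val s) (bidx ((enum_val r : partA A) s)) (bidx ((enum_val r' : partA A) s)).

Lemma cmx_local N (Op : {ffun 'I_N -> 'M[C]_2}) (psi : qstate R N) A :
  cmx (apply_local Op psi) A = LA Op A *m cmx psi A *m (LA Op (~: A))^T.
Proof.
apply/matrixP => r c; rewrite !mxE ffunE (sum_config A) sum_enum.
under eq_bigr => l _ do rewrite sum_enum.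
rewrite exchange_big /=; apply: eq_bigr => k _.
rewrite !mxE mulr_suml; apply: eq_bigr => l _.
rewrite !mxE (prod_split A).
rewrite mulrAC; congr (_ * _ * _); apply: eq_bigr => s _; by rewrite ?mgA ?mgB.
Qed.

Lemma rank_scale p q (a : C) (M : 'M[C]_(p, q)) : (\rank (a *: M) <= \rank M)%N.
Proof. by rewrite -mul_scalar_mx mxrankM_maxr. Qed.

Lemma schmidt_branch N (Op : {ffun 'I_N -> 'M[C]_2}) (psi : qstate R N) A :
  (schmidt_rank (branch_state Op psi) A <= schmidt_rank psi A)%N.
Proof.
rewrite !schmidt_cmx.
have -> : cmx (branch_state Op psi) A =
   ((Num.sqrt (branch_prob Op psi))^-1)%:C%C *: cmx (apply_local Op psi) A.
  by apply/matrixP => r c; rewrite !mxE ffunE.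
apply: leq_trans (rank_scale _ _) _.
rewrite cmx_local; apply: leq_trans (mxrankM_maxl _ _) _.
exact: mxrankM_maxr.
Qed.

End Coef.

Section Embed.
Variables (R : realType) (n N : nat) (f : 'I_n -> 'I_N) (phi : qstate R n) (A : {set 'I_N}).
Hypothesis hf : injective f.
Local Notation A' := [set i | f i \in A].

Definition gcfg (y : config n) : config N :=
  [ffun j => if [pick i | f i == j] is Some i then y i else false].

Lemma gcfg_f y i : gcfg y (f i) = y i.
Proof.
rewrite ffunE; case: pickP => [i' /eqP /hf -> //|/(_ i)]; by rewrite eqxx.
Qed.

Lemma gcfg_out y j : j \notin codom f -> gcfg y j = false.
Proof.
move=> hj; rewrite ffunE; case: pickP => // i /eqP e.
by move: hj; rewrite -e codom_f.
Qed.

Lemma embed_g y : embed f phi (gcfg y) = phi y.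
Proof.
rewrite /embed ffunE.
have -> : [forall i, (i \notin codom f) ==> ~~ gcfg y i].
  by apply/forallP => i; apply/implyP => /gcfg_out ->.
by rewrite /=; congr (phi _); apply/ffunP => i; rewrite ffunE gcfg_f.
Qed.

Definition a0 : partA A' := [ffun => false].
Definition b0 : partA (~: A') := [ffun => false].
Definition eA (a : partA A') : partA A := splitA A (gcfg (merge a b0)).
Definition eB (b : partA (~: A')) : partA (~: A) := splitB A (gcfg (merge a0 b)).

Lemma g_merge a b : gcfg (merge a b) = merge (eA a) (eB b).
Proof.
apply: mg_eq.
  move=> s; rewrite !ffunE; case: pickP => // i /eqP e.
  have hi : i \in A' by rewrite inE e (valP s).
  by move: (mgA a b (Sub i hi)) (mgA a b0 (Sub i hi)); rewrite SubK => -> ->.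
move=> t; rewrite !ffunE; case: pickP => // i /eqP e.
have hi : i \in ~: A' by rewrite !inE e; have := valP t; rewrite inE.
by move: (mgB a b (Sub i hi)) (mgB a0 b (Sub i hi)); rewrite SubK => -> ->.
Qed.

Lemma schmidt_embed : (schmidt_rank phi A' <= schmidt_rank (embed f phi) A)%N.
Proof.
rewrite !schmidt_cmx.
pose RR (r : 'I_#|{: partA A'}|) := enum_rank (eA (enum_val r)).
pose CC (c : 'I_#|{: partA (~: A')}|) := enum_rank (eB (enum_val c)).
have -> : cmx phi A' = rowsub RR (colsub CC (cmx (embed f phi) A)).
  by apply/matrixP => r c; rewrite !mxE !enum_rankK -g_merge embed_g.
rewrite rowsubE; apply: leq_trans (mxrankM_maxr _ _) _.
rewrite -[cmx _ _ in X in (\rank X <= _)%N](mulmx1) -mulmx_colsub.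
exact: mxrankM_maxl.
Qed.
End Embed.

Section Prob.
Variable R : realType.
Local Notation C := (R[i]).

Lemma bidx_inj : injective bidx.
Proof. by case; case. Qed.

Lemma sum_bool_bidx (V : nmodType) (F : 'I_2 -> V) : \sum_(b : bool) F (bidx b) = \sum_(k < 2) F k.
Proof.
rewrite (reindex bidx) //; exists (fun k : 'I_2 => val k == 1%N) => [b _|k _]; first by case: b.
by apply: val_inj; case: k => [[|[|?]] ?].
Qed.

Lemma prod_delta N (x y : config N) :
  \prod_(j < N) (1%:M : 'M[C]_2) (bidx (x j)) (bidx (y j)) = (x == y)%:R.
Proof.
case: eqP => [->|nxy].
  by apply: big1 => j _; rewrite mxE eqxx.
have : ~~ [forall j, x j == y j].
  by apply/negP => /forallP h; apply: nxy; apply/ffunP => j; apply/eqP/h.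
rewrite negb_forall => /existsP [j hj].
by rewrite (bigD1 j) //= mxE (inj_eq bidx_inj) (negbTE hj) mul0r.
Qed.

Lemma apply_local_id N (psi : qstate R N) : apply_local [ffun _ => 1%:M] psi = psi.
Proof.
apply/ffunP => x; rewrite ffunE.
have E : forall y : config N, \prod_(j < N) ([ffun _ => 1%:M] : {ffun 'I_N -> 'M[C]_2}) j (bidx (x j)) (bidx (y j)) = (x == y)%:R.
  by move=> y; rewrite -prod_delta; apply: eq_bigr => j _; rewrite ffunE.
under eq_bigr => y _ do rewrite E.
rewrite (bigD1 x) //= eqxx mul1r big1 ?addr0 // => y /negbTE.
by rewrite eq_sym => ->; rewrite mul0r.
Qed.

Lemma apply_localM N (O1 O2 : {ffun 'I_N -> 'M[C]_2}) (psi : qstate R N) :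
  apply_local O1 (apply_local O2 psi) = apply_local [ffun j => O1 j *m O2 j] psi.
Proof.
apply/ffunP => x; rewrite !ffunE.
under eq_bigr => y _ do rewrite ffunE big_distrr /=.
rewrite exchange_big /=; apply: eq_bigr => z _.
under eq_bigr => y _ do rewrite mulrA -big_split /=.
rewrite -mulr_suml; congr (_ * _).
rewrite -(bigA_distr_bigA (fun j (b : bool) => O1 j (bidx (x j)) (bidx b) * O2 j (bidx b) (bidx (z j)))) /=.
apply: eq_bigr => j _; rewrite ffunE mxE -sum_bool_bidx; done.
Qed.

Definition ip N (u v : qstate R N) : C := \sum_x (u x)^* * v x.
Definition adjops N (O : {ffun 'I_N -> 'M[C]_2}) : {ffun 'I_N -> 'M[C]_2} :=
  [ffun j => adjoint (O j)].

Lemma ip_adj N (O : {ffun 'I_N -> 'M[C]_2}) (u v : qstate R N) :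
  ip (apply_local O u) v = ip u (apply_local (adjops O) v).
Proof.
rewrite /ip; under eq_bigr => x _ do rewrite ffunE rmorph_sum big_distrl /=.
rewrite exchange_big; apply: eq_bigr => y _ /=; rewrite ffunE big_distrr /=.
apply: eq_bigr => x _; rewrite rmorphM rmorph_prod /=.
have -> : \prod_(j < N) adjops O j (bidx (y j)) (bidx (x j)) =
          \prod_(j < N) (O j (bidx (x j)) (bidx (y j)))^*.
  by apply: eq_bigr => j _; rewrite ffunE /adjoint !mxE.
by rewrite -mulrA mulrCA.
Qed.

Lemma norm2_ip N (psi : qstate R N) : (norm2 psi)%:C%C = ip psi psi.
Proof.
rewrite /norm2 /ip raddf_sum; apply: eq_bigr => x _.
rewrite /sqmod; exact: (etrans (add_Re2_Im2 (psi x)) (normCKC (psi x))).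
Qed.

Definition dlt N (k : 'I_N) (X : 'M[C]_2) : {ffun 'I_N -> 'M[C]_2} :=
  [ffun j => if j == k then X else 1%:M].

Lemma prod_dlt N (k : 'I_N) X (x y : config N) :
  \prod_(j < N) dlt k X j (bidx (x j)) (bidx (y j)) =
  X (bidx (x k)) (bidx (y k)) * \prod_(j < N | j != k) (1%:M : 'M[C]_2) (bidx (x j)) (bidx (y j)).
Proof.
rewrite (bigD1 k) //= ffunE eqxx; congr (_ * _).
by apply: eq_bigr => j /negbTE hj; rewrite ffunE hj.
Qed.

Lemma ip_dlt_sum N (k : 'I_N) m (M : 'I_m -> 'M[C]_2) (psi : qstate R N) :
  \sum_(i < m) ip psi (apply_local (dlt k (M i)) psi) =
  ip psi (apply_local (dlt k (\sum_(i < m) M i)) psi).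
Proof.
rewrite /ip exchange_big /=; apply: eq_bigr => x _.
rewrite -big_distrr /=; congr (_ * _).
rewrite ffunE; under eq_bigr => i _ do rewrite ffunE.
rewrite exchange_big /=; apply: eq_bigr => y _.
rewrite prod_dlt; under eq_bigr => i _ do rewrite prod_dlt.
by rewrite -!mulr_suml summxE.
Qed.

Lemma adjoint1 : adjoint (1%:M : 'M[C]_2) = 1%:M.
Proof. by apply/matrixP => a b; rewrite /adjoint !mxE conjC_nat eq_sym. Qed.

Lemma norm2_dlt N (k : 'I_N) X (psi : qstate R N) :
  (norm2 (apply_local (dlt k X) psi))%:C%C = ip psi (apply_local (dlt k (adjoint X *m X)) psi).
Proof.
rewrite norm2_ip ip_adj apply_localM; congr (ip _ (apply_local _ _)).
apply/ffunP => j; rewrite !ffunE; case: (j == k) => //.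
by rewrite adjoint1 mulmx1.
Qed.

Lemma complete N (k : 'I_N) m (M : 'I_m -> 'M[C]_2) (psi : qstate R N) :
  \sum_(i < m) adjoint (M i) *m M i = 1%:M ->
  \sum_(i < m) norm2 (apply_local (dlt k (M i)) psi) = norm2 psi.
Proof.
move=> hM; apply: (@complexI R); rewrite raddf_sum /=.
under eq_bigr => i _ do rewrite norm2_dlt.
rewrite ip_dlt_sum hM norm2_ip; congr (ip _ _).
rewrite -[in RHS](apply_local_id psi); congr apply_local.
by apply/ffunP => j; rewrite !ffunE; case: (j == k).
Qed.

Lemma upd_dlt N (k : 'I_N) (Op : {ffun 'I_N -> 'M[C]_2}) X :
  [ffun j => if j == k then Op j *m X else Op j] = [ffun j => Op j *m dlt k X j].
Proof. by apply/ffunP => j; rewrite !ffunE; case: (j == k); rewrite ?mulmx1. Qed.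

Lemma branches_sum N (P : locc R N) : locc_valid P ->
  forall psi, \sum_(Op <- branches P) branch_prob Op psi = norm2 psi.
Proof.
elim: P => [|k m M next IH] /=.
  by move=> _ psi; rewrite big_seq1 /branch_prob apply_local_id.
case=> hM hv psi; rewrite big_flatten big_map /=.
under eq_bigr => i _ do rewrite big_map.
under eq_bigr => i _ do under eq_bigr => Op _ do rewrite /branch_prob upd_dlt -apply_localM.
under eq_bigr => i _ do rewrite (IH i (hv i)).
by rewrite big_enum /= complete.
Qed.
End Prob.

Section Main.
Variable R : realType.
Local Notation C := (R[i]).

Lemma min_width_le N (psi : qstate R N) k : width_achievable psi k -> (min_width psi <= k)%N.
Proof.
move=> hk; rewrite /min_width; case: pselect => [h|h].
  by case: ex_minnP => m _ hm; apply: hm; apply/asboolP.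
by exfalso; apply: h; exists k; apply/asboolP.
Qed.

Lemma min_width_ach N (psi : qstate R N) :
  (exists k, width_achievable psi k) -> width_achievable psi (min_width psi).
Proof.
move=> [k hk]; rewrite /min_width; case: pselect => [h|h].
  by case: ex_minnP => m /asboolP.
by exfalso; apply: h; exists k; apply/asboolP.
Qed.

Lemma min_width0 N (psi : qstate R N) :
  ~ (exists k, width_achievable psi k) -> min_width psi = 0%N.
Proof.
move=> hn; rewrite /min_width; case: pselect => // h.
by exfalso; apply: hn; case: h => k /asboolP hk; exists k.
Qed.

Lemma log2_ge0 (k : nat) : 0 <= log2 (k%:R : R).
Proof.
rewrite /log2; case: k => [|k]; first by rewrite ln0 // mul0r.
apply: divr_ge0; first by apply: ln_ge0; rewrite ler1n.
by apply: ltW; apply: ln_gt0; rewrite ltr1n.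
Qed.

Lemma log2_mono (a b : nat) : (a <= b)%N -> log2 (a%:R : R) <= log2 (b%:R : R).
Proof.
case: a => [|a] hab; first by rewrite /log2 ln0 // mul0r log2_ge0.
rewrite /log2; apply: ler_wpM2r.
  by rewrite invr_ge0; apply: ltW; apply: ln_gt0; rewrite ltr1n.
rewrite ler_ln ?ler_nat // posrE ltr0n //; lia.
Qed.

Lemma chi_wd_ge0 N (psi : qstate R N) : 0 <= chi_wd psi.
Proof. exact: log2_ge0. Qed.

Lemma bigmax1 (I : finType) (P : pred I) (F : I -> nat) :
  \big[maxn/1%N]_(i | P i) F i = maxn 1 (\max_(i | P i) F i).
Proof.
apply: (big_rec2 (fun x y => x = maxn 1 y)) => // i y1 y2 _ ->.
by rewrite maxnCA.
Qed.

Lemma schmidt_le1 n (phi : qstate R n) (A : {set 'I_n}) : (n <= 1)%N ->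
  (schmidt_rank phi A <= 1)%N.
Proof.
move=> hn; rewrite schmidt_cmx.
have hc := cardsC A; rewrite card_ord in hc.
case: (posnP #|A|) => hA.
  apply: leq_trans (rank_leq_row _) _.
  by rewrite card_ffun card_bool card_sig (eq_card (B := A)) // hA.
have hB : #|~: A| = 0%N by lia.
apply: leq_trans (rank_leq_col _) _.
by rewrite card_ffun card_bool card_sig (eq_card (B := ~: A)) // hB.
Qed.

Lemma tree_width_le1 n (phi : qstate R n) m (adj : rel 'I_m) lab : (n <= 1)%N ->
  (tree_width phi adj lab <= 1)%N.
Proof.
move=> hn; rewrite /tree_width bigmax1 geq_max leqnn /=.
by apply/bigmax_leqP => e _; apply: schmidt_le1.
Qed.

Theorem main_mono N n (psi : qstate R N) (phi : qstate R n) (f : 'I_n -> 'I_N) :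
  injective f -> (n <= N)%N ->
  (forall A : {set 'I_N}, (schmidt_rank phi [set i | f i \in A] <= schmidt_rank psi A)%N) ->
  chi_wd phi <= chi_wd psi.
Proof.
move=> hf hnN hsr.
case: (pselect (exists k, width_achievable phi k)) => [hphi|hphi]; last first.
  by rewrite {1}/chi_wd min_width0 // /log2 ln0 // mul0r chi_wd_ge0.
case: (ltnP 1 n) => hn; last first.
  have [m [adj [lab [_ E]]]] := min_width_ach hphi.
  apply: le_trans (chi_wd_ge0 psi).
  rewrite /chi_wd -E; apply: le_trans (log2_mono (tree_width_le1 phi adj lab hn)) _.
  by rewrite /log2 ln1 mul0r.
have hN : (1 < N)%N by lia.
have [m0 [adj0 [lab0 ht0]]] := exists_subcubic hN.
have hpsi : exists k, width_achievable psi k.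
  by exists (tree_width psi adj0 lab0), m0, adj0, lab0.
have [m [adj [lab [ht E]]]] := min_width_ach hpsi.
have [m' [adj' [lab' [ht' hs]]]] := restrict_tree ht hf hn.
rewrite /chi_wd -E; apply: log2_mono.
apply: leq_trans (min_width_le (k := tree_width phi adj' lab') _) _.
  by exists m', adj', lab'.
rewrite /tree_width !bigmax1 geq_max leq_maxl /=.
apply/bigmax_leqP => [[x y]] /= exy.
have [u [v [euv ->]]] := hs _ _ exy.
apply: leq_trans (hsr _) _; apply: leq_trans (leq_maxr 1 _).
exact: (leq_bigmax_cond (u, v)).
Qed.
End Main.

Unset Implicit Arguments.

Theorem theorem4 (R : realType) :
  (forall (N n : nat) (psi : qstate R N) (psi' : qstate R n),
      (n <= N)%N -> normalized psi -> normalized psi' ->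
      slocc_convertible psi psi' ->
      chi_wd psi >= chi_wd psi')
  /\ typeI_monotone (@chi_wd R)
  /\ typeII_monotone (@chi_wd R).
Proof.
have part1 : forall (N n : nat) (psi : qstate R N) (psi' : qstate R n),
      (n <= N)%N -> slocc_convertible psi psi' -> chi_wd psi >= chi_wd psi'.
  move=> N n psi phi hnN [f [P [hf hv [Op hin [hp hb]]]]].
  apply: (main_mono hf hnN) => A.
  apply: leq_trans (@schmidt_embed R n N f phi A hf) _.
  rewrite -hb; exact: schmidt_branch.
have bp_ge0 : forall N (Op : {ffun 'I_N -> 'M[R[i]]_2}) (psi : qstate R N), 0 <= branch_prob Op psi.
  move=> N Op psi; rewrite /branch_prob /norm2; apply: sumr_ge0 => x _.
  by rewrite /sqmod addr_ge0 ?sqr_ge0.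
split; first by move=> N n psi phi hnN _ _; exact: part1.
split.
  move=> N psi P hn hv.
  have hsum := branches_sum hv psi; rewrite hn in hsum.
  have bound : forall Op, chi_wd (branch_state Op psi) <= chi_wd psi.
    move=> Op; apply: (@main_mono R N N psi (branch_state Op psi) id (@inj_id _) (leqnn _)) => A.
    have -> : [set i | id i \in A] = A by apply/setP => i; rewrite inE.
    exact: schmidt_branch.
  apply: le_trans (_ : \sum_(Op <- branches P | branch_prob Op psi > 0)
                        branch_prob Op psi * chi_wd psi <= _).
    by apply: ler_sum => Op _; apply: ler_wpM2l; [exact: bp_ge0|exact: bound].
  rewrite -mulr_suml -[X in _ <= X]mul1r; apply: ler_wpM2r; first exact: chi_wd_ge0.
  rewrite -hsum [X in _ <= X](bigID (fun Op => branch_prob Op psi > 0)) /= lerDl.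
  by apply: sumr_ge0 => Op _; exact: bp_ge0.
move=> N n psi phi hnN _ _ [f [P [hf hv hs]]].
have : has (fun Op => (branch_prob Op psi > 0) && `[< branch_state Op psi = embed f phi >]) (branches P).
  apply/negPn/negP => hh; move: hs; rewrite big_hasC // => e.
  by move: (@oner_neq0 R); rewrite e eqxx.
case/hasP => Op hin /andP [hp /asboolP hb].
apply: part1 => //; exists f, P; split => //; exists Op => //.
Qed.
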